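(* Let $d\le\ell$ be positive integers and $L\ge2$. For any $(p,n,d)$-non-backtracking multi-labelling of an $L$-graph in which every $p$-vertex carries $d$ $p$-labels, with $\tilde r$ distinct $n$-labels and $\tilde c$ distinct $p$-labels, $$\tilde r+\frac{\tilde c}{\ell}\le\frac L2+\frac{dL}{2\ell}.$$
   Context: An $L$-graph is a cycle with $2L$ vertices alternating between $n$-vertices and $p$-vertices. A $(p,n,d)$-non-backtracking multi-labelling assigns an $n$-label in $[n]$ to each $n$-vertex and a tuple of $d$ $p$-labels in $[p]$ to each $p$-vertex, with $d\le\ell$, such that: (i) the $n$-label of each $n$-vertex differs from those of the $n$-vertices immediately preceding and following it, and the tuple of each $p$-vertex differs (as a set, i.e. up to reordering) from those of the $p$-vertices immediately preceding and following it; (ii) for each $n$-label $i$ and $p$-label $j$ there is an even number of edges whose $n$-endpoint is labelled $i$ and whose $p$-endpoint's tuple contains $j$. *)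

(* Defs.v *)
From mathcomp Require Import all_boot all_order all_algebra.
Set Implicit Arguments. Unset Strict Implicit. Unset Printing Implicit Defensive.

(* An L-graph: cycle n_0, p_0, n_1, p_1, ..., n_{L-1}, p_{L-1}, (back to n_0).
   n-vertices and p-vertices are both indexed by 'I_L.  Edges:
   (n_k, p_k) and (n_{k+1 mod L}, p_k) for k : 'I_L  (2L edges). *)

Definition cnext (L : nat) (k : 'I_L) : 'I_L := ordS k.

Definition plabels (p d L : nat) (pl : 'I_L -> d.-tuple 'I_p) (k : 'I_L)
  : {set 'I_p} := [set j | j \in tval (pl k)].

Definition edge_count (n p d L : nat) (nl : 'I_L -> 'I_n)
  (pl : 'I_L -> d.-tuple 'I_p) (i : 'I_n) (j : 'I_p) : nat :=
  #|[set k : 'I_L | (nl k == i) && (j \in tval (pl k))]|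
  + #|[set k : 'I_L | (nl (cnext k) == i) && (j \in tval (pl k))]|.

Definition non_backtracking_multilabelling (n p d L : nat)
  (nl : 'I_L -> 'I_n) (pl : 'I_L -> d.-tuple 'I_p) : Prop :=
  (forall k : 'I_L, nl k != nl (cnext k)) /\
  (forall k : 'I_L, plabels pl k != plabels pl (cnext k)) /\
  (forall (i : 'I_n) (j : 'I_p), ~~ odd (edge_count nl pl i j)).

Definition num_nlabels (n L : nat) (nl : 'I_L -> 'I_n) : nat :=
  #|[set nl k | k : 'I_L]|.

Definition num_plabels (p d L : nat) (pl : 'I_L -> d.-tuple 'I_p) : nat :=
  #|\bigcup_(k : 'I_L) plabels pl k|.

(* Main.v *)
Require Import Defs.
From mathcomp Require Import all_boot all_order all_algebra.
Import GRing.Theory Num.Theory.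
From mathcomp Require Import ring.

Lemma card_eq1 (T : finType) (k0 : T) (b : pred T) :
  #|[set k | (k == k0) && b k]| = b k0.
Proof.
case hb: (b k0).
  suff ->: [set k | (k == k0) && b k] = [set k0] by rewrite cards1.
  by apply/setP=> k; rewrite !inE; case: eqP => // ->; rewrite hb.
suff ->: [set k | (k == k0) && b k] = set0 by rewrite cards0.
by apply/setP=> k; rewrite !inE; case: eqP => // ->; rewrite hb.
Qed.

Lemma card_ge2 (T : finType) (A : {set T}) (k0 : T) :
  k0 \in A -> (#|A| < 2)%N -> A = [set k0].
Proof.
move=> hk hc; apply/eqP; rewrite eq_sym eqEcard sub1set hk cards1 /=.
by rewrite -ltnS.
Qed.

Section S.
Variables (n p d L : nat) (nl : 'I_L -> 'I_n) (pl : 'I_L -> d.-tuple 'I_p).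
Hypothesis H : non_backtracking_multilabelling nl pl.

Lemma n_ge2 (i : 'I_n) : i \in [set nl k | k : 'I_L] ->
  (2 <= #|[set k | nl k == i]|)%N.
Proof.
case: H => Hn [Hp Hpar].
case/imsetP=> k0 _ ->.
rewrite leqNgt; apply/negP=> hc.
have E := @card_ge2 _ _ k0 _ hc.
rewrite inE eqxx in E; have {}E := E isT.
have En k : (nl k == nl k0) = (k == k0).
  by have := in_set1 k k0; rewrite -E inE.
set km := ord_pred k0.
have Ekm : cnext km = k0 by rewrite /cnext /km ord_predK.
have Hne : plabels pl km != plabels pl k0 by rewrite -[X in _ != plabels pl X]Ekm; exact: Hp.
have [j Hj]: exists j, (j \in plabels pl km) != (j \in plabels pl k0).
  apply/existsP; apply: contraNT Hne => /existsPn h; apply/eqP/setP => j.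
  by apply/eqP; move: (h j); rewrite negbK.
move: Hj.
have := Hpar (nl k0) j; rewrite /edge_count.
have ->: [set k | (nl k == nl k0) && (j \in tval (pl k))]
   = [set k | (k == k0) && (j \in tval (pl k))].
  by apply/setP=> k; rewrite !inE En.
have ->: [set k | (nl (cnext k) == nl k0) && (j \in tval (pl k))]
   = [set k | (k == km) && (j \in tval (pl k))].
  apply/setP=> k; rewrite !inE En -{1}Ekm.
  by rewrite (inj_eq (@ordS_inj _)).
rewrite !card_eq1 /plabels !inE.
by case: (j \in tval (pl km)); case: (j \in tval (pl k0)).
Qed.

Lemma p_ge2 (j : 'I_p) : j \in \bigcup_(k : 'I_L) plabels pl k ->
  (2 <= #|[set k | j \in tval (pl k)]|)%N.
Proof.
case: H => Hn [Hp Hpar].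
case/bigcupP=> k0 _; rewrite /plabels inE => hk0.
rewrite leqNgt; apply/negP=> hc.
have E := @card_ge2 _ _ k0 _ hc.
rewrite inE hk0 in E; have {}E := E isT.
have Ej k : (j \in tval (pl k)) = (k == k0).
  by have := in_set1 k k0; rewrite -E inE.
have := Hpar (nl k0) j; rewrite /edge_count.
have ->: [set k | (nl k == nl k0) && (j \in tval (pl k))] = [set k0].
  apply/setP=> k; rewrite !inE Ej andbC; case: eqP => // ->; by rewrite eqxx.
have ->: [set k | (nl (cnext k) == nl k0) && (j \in tval (pl k))] = set0.
  apply/setP=> k; rewrite !inE Ej andbC; case: eqP => // ->.
  by rewrite eq_sym (negbTE (Hn k0)).
by rewrite cards1 cards0.
Qed.

Lemma r_bound : (2 * #|[set nl k | k : 'I_L]| <= L)%N.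
Proof.
rewrite -[X in (_ <= X)%N]card_ord -[X in (_ <= X)%N]sum1_card.
rewrite (partition_big nl (mem [set nl k | k : 'I_L])) /=; last first.
  by move=> k _; apply: imset_f.
rewrite -sum1_card big_distrr /=; apply: leq_sum => i hi.
by rewrite muln1 sum1_card -cardsE; apply: n_ge2.
Qed.

Lemma c_bound : (2 * #|\bigcup_(k : 'I_L) plabels pl k| <= d * L)%N.
Proof.
apply: (@leq_trans (\sum_(k : 'I_L) #|plabels pl k|)); last first.
  rewrite -[X in (_ <= d * X)%N]card_ord -sum1_card big_distrr /=.
  apply: leq_sum => k _; rewrite muln1.
  rewrite /plabels cardsE; have := card_size (tval (pl k)).
  by rewrite size_tuple.
have -> : (\sum_(k : 'I_L) #|plabels pl k| =
   \sum_(k : 'I_L) \sum_(j : 'I_p) (j \in tval (pl k) : nat))%N.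
  apply: eq_bigr => k _; rewrite -sum1_card big_mkcond /=.
  by apply: eq_bigr => j _; rewrite /plabels inE; case: (_ \in _).
rewrite exchange_big /=.
rewrite -sum1_card big_distrr /= [X in (_ <= X)%N](bigID (mem (\bigcup_(k : 'I_L) plabels pl k))) /=.
apply: leq_trans (leq_addr _ _); apply: leq_sum => j hj.
rewrite muln1. apply: (leq_trans (p_ge2 _ hj)).
rewrite -sum1_card big_mkcond /=; apply: leq_sum => k _.
by rewrite inE; case: (_ \in _).
Qed.
End S.

Local Open Scope ring_scope.

Theorem lemma5p4 (n p d l L : nat) (nl : 'I_L -> 'I_n)
  (pl : 'I_L -> d.-tuple 'I_p) :
  (0 < d)%N -> (d <= l)%N -> (2 <= L)%N ->
  non_backtracking_multilabelling nl pl ->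
  ((num_nlabels nl)%:R + (num_plabels pl)%:R / l%:R
   <= L%:R / 2 + (d * L)%:R / (2 * l)%:R :> rat).
Proof.
move=> d0 dl L2 H.
have hr := @r_bound _ _ _ _ nl pl H; have hc := @c_bound _ _ _ _ nl pl H.
rewrite /num_nlabels /num_plabels.
set r := #|_| in hr *; set c := #|_| in hc *.
have l0 : (0 < l)%N by apply: leq_trans dl.
have key : (2 * l * r + 2 * c <= l * L + d * L)%N.
  rewrite -mulnA mulnCA; apply: leq_add => //; exact: leq_mul (leqnn l) hr.
have lR : (l%:R : rat) != 0 by rewrite pnatr_eq0 -lt0n.
rewrite -subr_ge0.
have -> : L%:R / 2 + (d * L)%:R / (2 * l)%:R - (r%:R + c%:R / l%:R)
   = ((l * L + d * L)%:R - (2 * l * r + 2 * c)%:R) / (2 * l)%:R :> rat.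
  rewrite !natrD !natrM; field; by rewrite lR andbT -natrD pnatr_eq0 -lt0n addn_gt0 l0.
by rewrite divr_ge0 // subr_ge0 ler_nat.
Qed.
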